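(* Let $(g,n)$ be a hyperbolic pair and $d\in\mathbb Z$. The map $\mathfrak m\mapsto(\mathfrak m|_{\mathcal D(\Gamma)})_{\Gamma\in G_{g,n}}$ is a bijection from the set of degree $d$ universal stability conditions of type $(g,n)$ onto the set of families $(\mathfrak m^\Gamma)_{\Gamma\in G_{g,n}}$, where each $\mathfrak m^\Gamma$ is a degree $d$ c-stability condition on $\Gamma$, that agree on common domains (i.e. $\mathfrak m^\Gamma_{(e,h,A)}=\mathfrak m^{\Gamma'}_{(e,h,A)}$ whenever $(e,h,A)\in\mathcal D(\Gamma)\cap\mathcal D(\Gamma')$). The inverse sends such a family to $\mathfrak m$ with $\mathfrak m_{(e,h,A)}=\mathfrak m^\Gamma_{(e,h,A)}$ for any $\Gamma$ with $(e,h,A)\in\mathcal D(\Gamma)$.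
   Context: Fix integers $g,n\ge0$ with $2g-2+n>0$, $[n]=\{1,\dots,n\}$. A stable graph of type $(g,n)$ is a finite connected multigraph $\Gamma$ (loops allowed) with genus function $g:V(\Gamma)\to\mathbb Z_{\ge0}$ and markings $A(v)\subseteq[n]$ partitioning $[n]$, with $|E(\Gamma)|-|V(\Gamma)|+1+\sum_v g(v)=g$ and $2g(v)-2+\mathrm{val}(v)+|A(v)|>0$ for all $v$; $G_{g,n}$ is the set of representatives of isomorphism classes of such graphs. For $W\subseteq V(\Gamma)$: $\mathrm{val}(W)$ = number of edges between $W$ and its complement, $g(W)$ = genus of the induced subgraph $\Gamma[W]$ ($|E(\Gamma[W])|-|W|+1+\sum_{v\in W}g(v)$), $A(W)=\bigcup_{v\in W}A(v)$; $W$ is nontrivial biconnected if $\emptyset\ne W\ne V(\Gamma)$ and $W$ and its complement induce connected subgraphs; $\mathcal D(\Gamma)=\{(\mathrm{val}(W),g(W),A(W)): W \text{ nontrivial biconnected}\}$. The vine graph $V(e,h,A)$ has vertices $v_1,v_2$ joined by $e$ edges, no loops, $g(v_1)=h$, $A(v_1)=A$, $g(v_2)=g+1-e-h$, $A(v_2)=[n]\setminus A$; $\mathcal D_{g,n}$ is the set of $(e,h,A)$ ($e\ge1,h\ge0,g+1-e-h\ge0$, $A\subseteq[n]$) with $V(e,h,A)$ stable. A degree $d$ universal stability condition of type $(g,n)$ is a family of integers $(\mathfrak m_{(e,h,A)})_{(e,h,A)\in\mathcal D_{g,n}}$ with (i) $\mathfrak m_{(e,h,A)}+\mathfrak m_{(e,g+1-e-h,[n]\setminus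 A)}=d+1-e$ and (ii) $0\le \mathfrak m_{(e,h,A)}-h-(\mathfrak m_{(e',h',A')}-h')-(\mathfrak m_{(e'',h'',A'')}-h'')\le1$ whenever $A=A'\sqcup A''$, $2(h+1-h'-h'')=e'+e''-e$, and $e<e'+e''$, $e'<e+e''$, $e''<e+e'$. A degree $d$ c-stability condition on $\Gamma$ is a family of integers indexed by $\mathcal D(\Gamma)$ satisfying (i) and (ii) for all triples of elements of $\mathcal D(\Gamma)$. *)

(* Defs.v *)
From mathcomp Require Import all_boot all_order all_algebra.
Set Implicit Arguments. Unset Strict Implicit. Unset Printing Implicit Defensive.
Import Order.TTheory GRing.Theory Num.Theory.

(* Markings [n] = {1,...,n} are represented by 'I_n = {0,...,n-1}. *)

(* Vertices are 'I_nv, edges are 'I_ne; edge i joins the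
   two (unordered) endpoints (ends i).1 and (ends i).2 (a loop if equal).
   Marking j lies on vertex (mark j), so A(v) = [set j | mark j == v]. *)
Record sgraph (n : nat) := SGraph {
  nv : nat;
  ne : nat;
  ends : 'I_ne -> 'I_nv * 'I_nv;
  gen : 'I_nv -> nat;
  mark : 'I_n -> 'I_nv }.

Arguments nv {n} s.
Arguments ne {n} s.
Arguments ends {n} s _.
Arguments gen {n} s _.
Arguments mark {n} s _.

Section Graphs.
Variable n : nat.
Variable G : sgraph n.

Definition vtx := 'I_(nv G).

Definition adj : rel vtx :=
  fun u v => [exists i : 'I_(ne G), (ends G i == (u, v)) || (ends G i == (v, u))].

Definition Aof (v : vtx) : {set 'I_n} := [set j | mark G j == v].

Definition valv (v : vtx) : nat :=
  \sum_(i : 'I_(ne G)) (((ends G i).1 == v) + ((ends G i).2 == v)).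

Definition connectedG : bool :=
  (0 < nv G) && [forall u : vtx, forall v : vtx, connect adj u v].

Definition stable_graph (g : nat) : bool :=
  [&& connectedG,
      ne G + 1 + \sum_(v : vtx) gen G v == g + nv G &
      [forall v : vtx, 2 < 2 * gen G v + valv v + #|Aof v| ]].

Definition valW (W : {set vtx}) : nat :=
  #|[set i : 'I_(ne G) | ((ends G i).1 \in W) != ((ends G i).2 \in W)]|.

Definition edgesIn (W : {set vtx}) : nat :=
  #|[set i : 'I_(ne G) | ((ends G i).1 \in W) && ((ends G i).2 \in W)]|.

(* genus of the induced subgraph G[W]: |E(G[W])| - |W| + 1 + sum g(v);
   (computed in nat; exact whenever G[W] is connected, which is the only
   case in which it is used) *)
Definition genW (W : {set vtx}) : nat :=
  edgesIn W + 1 + \sum_(v in W) gen G v - #|W|.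

Definition AW (W : {set vtx}) : {set 'I_n} := [set j | mark G j \in W].

Definition induced_connected (W : {set vtx}) : bool :=
  [forall u in W, forall v in W,
     connect (fun x y => [&& x \in W, y \in W & adj x y]) u v].

Definition biconnected (W : {set vtx}) : bool :=
  [&& W != set0, W != setT, induced_connected W & induced_connected (~: W)].

Definition DG (x : nat * nat * {set 'I_n}) : bool :=
  [exists W : {set vtx}, biconnected W && (x == (valW W, genW W, AW W))].

End Graphs.

Definition triple (n : nat) := (nat * nat * {set 'I_n})%type.

Definition iso_sgraph (n : nat) (G1 G2 : sgraph n) : Prop :=
  exists (fV : 'I_(nv G1) -> 'I_(nv G2)) (fE : 'I_(ne G1) -> 'I_(ne G2)),
    [/\ bijective fV, bijective fE,
        (forall i, ends G2 (fE i) = (fV (ends G1 i).1, fV (ends G1 i).2)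
                \/ ends G2 (fE i) = (fV (ends G1 i).2, fV (ends G1 i).1)),
        (forall v, gen G2 (fV v) = gen G1 v) &
        (forall j, mark G2 j = fV (mark G1 j))].

(* The vine graph V(e,h,A): vertex 0 = v1, vertex 1 = v2. *)
Definition vine (g n e h : nat) (A : {set 'I_n}) : sgraph n :=
  @SGraph n 2 e (fun _ => (ord0, ord_max))
    (fun v => if v == ord0 then h else g + 1 - e - h)
    (fun j => if j \in A then ord0 else ord_max).

Definition Dgn (g n : nat) (x : triple n) : bool :=
  let: (e, h, A) := x in
  [&& 1 <= e, e + h <= g + 1 & stable_graph (vine g e h A) g].

Definition dual (g n : nat) (x : triple n) : triple n :=
  let: (e, h, A) := x in (e, g + 1 - e - h, ~: A).

(* conditions (i) and (ii) relative to a domain P of triples *)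
Definition stab_cond (g n : nat) (P : triple n -> bool) (d : int)
    (m : triple n -> int) : Prop :=
  (forall x, P x -> P (dual g x) ->
     (m x + m (dual g x) = d + 1 - (x.1.1)%:Z)%R) /\
  (forall e h A e' h' A' e'' h'' A'',
     P (e, h, A) -> P (e', h', A') -> P (e'', h'', A'') ->
     A = A' :|: A'' -> [disjoint A' & A''] ->
     (2 * (h%:Z + 1 - h'%:Z - h''%:Z) = e'%:Z + e''%:Z - e%:Z)%R ->
     e < e' + e'' -> e' < e + e'' -> e'' < e + e' ->
     let t := (m (e, h, A) - h%:Z - (m (e', h', A') - h'%:Z)
                 - (m (e'', h'', A'') - h''%:Z))%R in
     (0 <= t <= 1)%R).

(* degree d universal stability condition of type (g,n): only the values
   on D_{g,n} are meaningful *)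
Definition universal_stab (g n : nat) (d : int) (m : triple n -> int) : Prop :=
  stab_cond g (@Dgn g n) d m.

(* degree d c-stability condition on G: only the values on D(G) matter *)
Definition cstab (g n : nat) (G : sgraph n) (d : int) (m : triple n -> int) : Prop :=
  stab_cond g (DG G) d m.

(* R is a set of representatives of the isomorphism classes of stable graphs
   of type (g,n), i.e. R plays the role of G_{g,n}. *)
Definition representatives (g n : nat) (R : sgraph n -> Prop) : Prop :=
  [/\ (forall G, R G -> stable_graph G g),
      (forall G, stable_graph G g -> exists2 G', R G' & iso_sgraph G G') &
      (forall G G', R G -> R G' -> iso_sgraph G G' -> G = G')].

(* Main.v *)
Require Import Defs.
From mathcomp Require Import all_boot all_order all_algebra.
From mathcomp Require Import zify.
Set Implicit Arguments. Unset Strict Implicit. Unset Printing Implicit Defensive.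


Lemma connect_homo (T T' : finType) (e : rel T) (e' : rel T') (f : T -> T') :
  (forall x y, e x y -> e' (f x) (f y)) ->
  forall x y, connect e x y -> connect e' (f x) (f y).
Proof.
move=> H x y /connectP [p pp ->]; elim: p x pp => [|z p IH] x /=.
  by rewrite connect0.
case/andP=> exz pz; exact: connect_trans (connect1 (H _ _ exz)) (IH _ pz).
Qed.

Lemma connect_restr (T : finType) (e : rel T) (P : pred T) x y :
  P x -> (forall u v, P u -> e u v -> P v) -> connect e x y ->
  connect [rel u v | [&& P u, P v & e u v]] x y.
Proof.
move=> Px H /connectP [p pp ->]; elim: p x Px pp => [|z p IH] x Px /=.
  by rewrite connect0.
case/andP=> exz pz; have Pz := H _ _ Px exz.
apply: connect_trans (connect1 _) (IH _ Pz pz); by rewrite /= Px Pz exz.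
Qed.

Lemma connect_false (T : finType) (e : rel T) (x y : T) :
  (forall u v, ~~ e u v) -> connect e x y -> x = y.
Proof.
move=> H /connectP [[|z p] /= pp ->] //.
by move: pp; rewrite (negbTE (H _ _)).
Qed.

Lemma card_sum (I : finType) (P : pred I) : #|[set i | P i]| = \sum_i (P i : nat).
Proof.
rewrite -sum1_card big_mkcond /=; apply: eq_bigr => i _; rewrite inE; by case: (P i).
Qed.

Section Tree.
Variables (T I : finType) (en : I -> T * T).

Definition erel (S : {set I}) (W : {set T}) : rel T := fun u v =>
  [&& u \in W, v \in W & [exists i in S, (en i == (u,v)) || (en i == (v,u))]].
Definition Ein (S : {set I}) (W : {set T}) : {set I} :=
  [set i in S | ((en i).1 \in W) && ((en i).2 \in W)].

Lemma erel_sym S W : symmetric (erel S W).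
Proof.
move=> u v; rewrite /erel andbCA; congr (_ && (_ && _)).
by apply: eq_existsb => i; rewrite orbC.
Qed.

Lemma tree k : forall S W, #|Ein S W| <= k ->
  {in W &, forall u v, connect (erel S W) u v} -> #|W| <= #|Ein S W| + 1.
Proof.
have base : forall S W, Ein S W = set0 ->
  {in W &, forall u v, connect (erel S W) u v} -> #|W| <= 1.
  move=> S W E0 C; apply/card_le1_eqP => u v uW vW.
  apply: (connect_false _ (C _ _ vW uW)) => a b; apply/negP.
  case/and3P => aW bW /existsP [i /andP [iS ei]].
  have : i \in Ein S W.
    by rewrite inE iS; case/orP: ei => /eqP -> /=; rewrite ?aW ?bW.
  by rewrite E0 inE.
elim: k => [|k IH] S W Hk C.
  have E0 : Ein S W = set0 by apply/eqP; rewrite -cards_eq0; lia.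
  by have := base S W E0 C; lia.
case: (set_0Vmem (Ein S W)) => [E0|[i iE]]; first by have := base S W E0 C; lia.
move: (iE); rewrite inE => /and3P [iS xW yW].
set x := (en i).1 in xW *; set y := (en i).2 in yW *.
set S' := S :\ i.
have ES' : Ein S' W = Ein S W :\ i.
  apply/setP => j; rewrite /Ein /S' [in LHS]inE [in RHS]in_setD1 in_setD1 in_set; by rewrite !andbA.
have cES : #|Ein S W| = #|Ein S' W| + 1.
  by rewrite ES' (cardsD1 i (Ein S W)) iE; lia.
set e' := erel S' W.
have sym' : connect_sym e' by apply: sym_connect_sym; apply: erel_sym.
have key : forall w, w \in W -> connect e' x w || connect e' y w.
  move=> w wW.
  have cl : closed (erel S W) [pred z | connect e' x z || connect e' y z].
    apply: intro_closed; first by apply: sym_connect_sym; apply: erel_sym.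
    move=> u v /and3P [uW vW /existsP [j /andP [jS ej]]].
    rewrite !inE /=.
    case: (eqVneq j i) => [ji|ji].
      case/orP: ej => /eqP E; rewrite ji in E; rewrite /x /y E /= => _; by rewrite connect0 ?orbT.
    have euv : e' u v.
      by rewrite /e' /erel uW vW; apply/existsP; exists j; rewrite !inE ji jS ej.
    by case/orP => H; apply/orP; [left|right]; apply: connect_trans H (connect1 euv).
  by have := closed_connect cl (C _ _ xW wW); rewrite !inE /= connect0 => <-.
have Ck : #|Ein S' W| <= k by lia.
case cxy: (connect e' x y).
  have C' : {in W &, forall u v, connect e' u v}.
    move=> u v uW vW.
    have xu : connect e' x u.
      by case/orP: (key _ uW) => // H; apply: connect_trans cxy H.
    have xv : connect e' x v.
      by case/orP: (key _ vW) => // H; apply: connect_trans cxy H.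
    by apply: connect_trans xv; rewrite sym'.
  by have := IH S' W Ck C'; lia.
pose X := [set w in W | connect e' x w].
pose Y := [set w in W | connect e' y w].
have part : forall z, connect e' z = connect e' z by [].
have subc : forall (Z : {set T}) z, z \in W -> Z = [set w in W | connect e' z w] ->
    #|Z| <= #|Ein S' Z| + 1 /\ Ein S' Z \subset Ein S' W.
  move=> Z z zW ->; set Z' := [set w in W | _].
  have ZW : Z' \subset W by apply/subsetP => w; rewrite inE => /andP [].
  have sub : Ein S' Z' \subset Ein S' W.
    apply/subsetP => j; rewrite !inE => /and3P [-> a b].
    by case/andP: a => -> _; case/andP: b => -> _.
  split => //; apply: IH; first by have := subset_leq_card sub; lia.
  have cz : forall u, u \in Z' -> connect (erel S' Z') z u.
    move=> u; rewrite inE => /andP [uW zu].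
    have H := @connect_restr _ e' (fun w => w \in Z') z u.
    have zZ : z \in Z' by rewrite inE zW connect0.
    have step : forall a b, a \in Z' -> e' a b -> b \in Z'.
      move=> a b; rewrite !inE => /andP [aW za] eab.
      case/and3P: (eab) => _ bW _; rewrite bW /=; exact: connect_trans za (connect1 eab).
    move: (H zZ step zu); apply: connect_sub => a b /= /and3P [aZ bZ /and3P [_ _ ex]].
    by apply: connect1; rewrite /erel aZ bZ ex.
  have sZ : connect_sym (erel S' Z') by apply: sym_connect_sym; apply: erel_sym.
  move=> u v uZ vZ; apply: connect_trans (cz _ vZ); rewrite sZ; exact: cz.
have [cX sX] := subc X x xW erefl.
have [cY sY] := subc Y y yW erefl.
have XY0 : X :&: Y = set0.
  apply/setP => w; rewrite !inE; apply/negP => /andP [/andP [_ xw] /andP [_ yw]].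
  by move: cxy; rewrite (connect_trans xw _) //; rewrite sym'.
have WXY : W = X :|: Y.
  apply/setP => w; rewrite !inE; case wW: (w \in W) => //=; by rewrite (key w wW).
have E0 : Ein S' X :&: Ein S' Y = set0.
  apply/setP => j; rewrite !inE; apply/negP => /andP [/and3P [_ a _] /and3P [_ b _]].
  case/andP: a => _ xa; case/andP: b => _ ya.
  by move: cxy; rewrite (connect_trans xa _) // sym'.
have h1 := cardsUI X Y; have h2 := cardsUI (Ein S' X) (Ein S' Y).
rewrite XY0 cards0 -WXY in h1; rewrite E0 cards0 in h2.
have h3 : #|Ein S' X :|: Ein S' Y| <= #|Ein S' W| by apply: subset_leq_card; rewrite subUset sX sY.
lia.
Qed.
End Tree.


Lemma sum_eq1 (T : finType) (W : {set T}) a :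
  \sum_(v in W) ((a == v) : nat) = (a \in W).
Proof.
rewrite big_mkcond (bigD1 a) //= eqxx big1 ?addn0; first by case: (a \in W).
by move=> v /negbTE; rewrite eq_sym => ->; case: (v \in W).
Qed.

Section G.
Variables (n : nat) (G : sgraph n).

Lemma Ein_edges (W : {set vtx G}) : #|Ein (ends G) setT W| = edgesIn W.
Proof. by rewrite /Ein /edgesIn; apply: eq_card => i; rewrite !inE. Qed.

Lemma tree_bound (W : {set vtx G}) : induced_connected W -> #|W| <= edgesIn W + 1.
Proof.
move=> /forall_inP C; rewrite -Ein_edges; apply: (tree (k := #|Ein (ends G) setT W|)) => // u v uW vW.
have := forall_inP (C u uW) v vW; rewrite (eq_connect (e' := erel (ends G) setT W)) //.
move=> a b /=; rewrite /erel /adj; congr (_ && (_ && _)).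
by apply: eq_existsb => i; rewrite inE.
Qed.

Lemma crossing_pos (W : {set vtx G}) : connectedG G -> W != set0 -> W != setT -> 0 < valW W.
Proof.
case/andP=> _ /forallP C /set0Pn [u uW] WT.
have [v vW] : exists v, v \notin W.
  apply/existsP; move: WT; apply: contraR; rewrite negb_exists => /forallP H.
  by apply/eqP/setP => v; rewrite inE; move: (H v); rewrite negbK.
rewrite lt0n cards_eq0; apply/negP => /eqP E.
have cl : closed (@adj _ G) W.
  move=> x y /existsP [i ei]; case: (eqVneq (x \in W) (y \in W)) => // H; exfalso.
  have : i \in [set i : 'I_(ne G) | ((ends G i).1 \in W) != ((ends G i).2 \in W)].
    by rewrite inE; case/orP: ei => /eqP -> //=; rewrite eq_sym.
  by rewrite E inE.
by have := closed_connect cl (forallP (C u) v); rewrite uW; move: vW => /negbTE ->.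
Qed.

Lemma edges_split (W : {set vtx G}) : ne G = edgesIn W + edgesIn (~:W) + valW W.
Proof.
rewrite /edgesIn /valW !card_sum -!big_split /=.
transitivity (\sum_(i : 'I_(ne G)) 1); first by rewrite sum_nat_const card_ord muln1.
apply: eq_bigr => i _; rewrite !inE.
by case: ((ends G i).1 \in W); case: ((ends G i).2 \in W).
Qed.

Lemma gen_split (W : {set vtx G}) : \sum_v gen G v = \sum_(v in W) gen G v + \sum_(v in ~:W) gen G v.
Proof.
rewrite (bigID (fun v => v \in W)) /=; congr (_ + _).
by apply: eq_bigl => v; rewrite inE.
Qed.

Lemma card_split (W : {set vtx G}) : nv G = #|W| + #|~:W|.
Proof. by rewrite cardsC card_ord. Qed.

Lemma val_sum (W : {set vtx G}) : \sum_(v in W) valv v = 2 * edgesIn W + valW W.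
Proof.
rewrite /valv exchange_big /=.
rewrite /edgesIn /valW !card_sum big_distrr -big_split /=.
apply: eq_bigr => i _; rewrite big_split /= !sum_eq1.
by case: ((ends G i).1 \in W); case: ((ends G i).2 \in W).
Qed.

Lemma A_sum (W : {set vtx G}) : \sum_(v in W) #|Aof v| = #|AW W|.
Proof.
rewrite /Aof /AW (eq_bigr (fun v => \sum_j ((mark G j == v) : nat))); last first.
  by move=> v _; rewrite card_sum.
rewrite exchange_big card_sum /=; apply: eq_bigr => j _; by rewrite sum_eq1.
Qed.

Lemma stab_sum g (W : {set vtx G}) : stable_graph G g ->
  3 * #|W| <= 2 * \sum_(v in W) gen G v + \sum_(v in W) valv v + \sum_(v in W) #|Aof v|.
Proof.
case/and3P => _ _ /forallP S.
rewrite big_distrr -!big_split /= -sum1_card big_distrr /=.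
by apply: leq_sum => v _; move: (S v); rewrite muln1.
Qed.

Lemma valWC (W : {set vtx G}) : valW (~:W) = valW W.
Proof.
rewrite /valW; apply: eq_card => i; rewrite !inE.
by case: ((ends G i).1 \in W); case: ((ends G i).2 \in W).
Qed.

Lemma AWC (W : {set vtx G}) : AW (~:W) = ~: AW W.
Proof. by apply/setP => j; rewrite !inE. Qed.

End G.


Lemma sum_I2 (f : 'I_2 -> nat) : \sum_v f v = f ord0 + f ord_max.
Proof.
rewrite !big_ord_recl big_ord0 addn0; congr (f _ + f _); exact: val_inj.
Qed.

Lemma I2_cases (v : 'I_2) : v = ord0 \/ v = ord_max.
Proof. by case: v => [[|[|m]] Hm]; [left|right|]; try apply: val_inj. Qed.

Lemma single_conn n (G : sgraph n) (W : {set vtx G}) :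
  (forall u v, u \in W -> v \in W -> u = v) -> induced_connected W.
Proof.
move=> H; apply/forall_inP => u uW; apply/forall_inP => v vW.
by rewrite (H _ _ uW vW) connect0.
Qed.

Section Vine.
Variables (g n e h : nat) (A : {set 'I_n}).
Local Notation V := (vine g e h A).

Lemma vine_valv (v : vtx V) : valv v = e.
Proof.
rewrite /valv /=; case: (I2_cases v) => ->;
  by rewrite (eq_bigr (fun _ => 1)) ?sum_nat_const ?card_ord ?muln1.
Qed.

Lemma vine_Aof0 : Aof (G := V) ord0 = A.
Proof. by apply/setP => j; rewrite !inE /=; case: (j \in A). Qed.

Lemma vine_Aof1 : Aof (G := V) ord_max = ~: A.
Proof. by apply/setP => j; rewrite !inE /=; case: (j \in A). Qed.

Lemma vine_gen_sum : \sum_(v : vtx V) gen V v = h + (g + 1 - e - h).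
Proof. by rewrite (sum_I2 (gen V)). Qed.

End Vine.

Lemma Dgn_elim g n e h (A : {set 'I_n}) : Dgn g (e,h,A) ->
  [/\ 1 <= e, e + h <= g + 1, 2 < 2 * h + e + #|A| & 2 < 2 * (g + 1 - e - h) + e + #|~:A|].
Proof.
case/and3P => e1 eh /and3P [_ _ /forallP S]; split => //.
  by move: (S ord0); rewrite vine_valv vine_Aof0.
by move: (S ord_max); rewrite vine_valv vine_Aof1.
Qed.

Lemma Dgn_intro g n e h (A : {set 'I_n}) :
  1 <= e -> e + h <= g + 1 -> 2 < 2 * h + e + #|A| -> 2 < 2 * (g + 1 - e - h) + e + #|~:A| ->
  Dgn g (e,h,A).
Proof.
move=> e1 eh s0 s1; rewrite /Dgn e1 eh /=; apply/and3P; split.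
- apply/andP; split => //; apply/forallP => u; apply/forallP => v.
  have a01 : @adj _ (vine g e h A) ord0 ord_max.
    by apply/existsP; exists (Ordinal e1); rewrite eqxx.
  have a10 : @adj _ (vine g e h A) ord_max ord0.
    by apply/existsP; exists (Ordinal e1); rewrite eqxx orbT.
  by case: (I2_cases u) => ->; case: (I2_cases v) => ->;
    rewrite ?connect0 // connect1.
- by rewrite vine_gen_sum /=; apply/eqP; lia.
- apply/forallP => v; rewrite vine_valv; case: (I2_cases v) => ->.
    by rewrite vine_Aof0.
  by rewrite vine_Aof1.
Qed.

Lemma vine_DG g n e h (A : {set 'I_n}) : Dgn g (e,h,A) ->
  DG (vine g e h A) (e,h,A) /\ DG (vine g e h A) (dual g (e,h,A)).
Proof.
move=> D; have [e1 eh _ _] := Dgn_elim D.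
have ne01 : (ord0 : 'I_2) != ord_max by [].
have bic : forall w : 'I_2, biconnected (G := vine g e h A) [set w].
  move=> w; apply/and4P; split.
  - by apply/set0Pn; exists w; rewrite inE.
  - apply/negP => /eqP E.
    have : (if w == ord0 then ord_max else ord0) \in [set w] by rewrite E inE.
    by rewrite inE; case: (I2_cases w) => ->.
  - by apply: single_conn => u v; rewrite !inE => /eqP -> /eqP ->.
  - apply: single_conn => u v; rewrite !inE => un vn.
    by case: (I2_cases w) u v un vn => -> u v; case: (I2_cases u) => ->; case: (I2_cases v) => ->.
have valw : forall w : 'I_2, valW (G := vine g e h A) [set w] = e.
  move=> w; rewrite /valW -[RHS]card_ord; apply: eq_card => i; rewrite !inE /=.
  by case: (I2_cases w) => ->.
have edg : forall w : 'I_2, edgesIn (G := vine g e h A) [set w] = 0.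
  move=> w; apply/eqP; rewrite cards_eq0; apply/eqP/setP => i; rewrite !inE /=.
  by case: (I2_cases w) => ->.
split; apply/existsP.
  exists [set ord0]; rewrite bic /=; apply/eqP.
  rewrite /genW valw edg big_set1 cards1 /=; congr (_, _, _); first lia.
  by apply/setP => j; rewrite !inE /=; case: (j \in A).
exists [set ord_max]; rewrite bic /=; apply/eqP.
rewrite /genW valw edg big_set1 cards1 /=; congr (_, _, _); first lia.
by apply/setP => j; rewrite !inE /=; case: (j \in A).
Qed.


Lemma DG_Dgn g n (G : sgraph n) x : stable_graph G g -> DG G x -> Dgn g x.
Proof.
move=> SG /existsP [W /andP [/and4P [W0 WT icW icC] /eqP ->]].
have e1 := crossing_pos (andP SG).1 W0 WT.
have t1 := tree_bound icW; have t2 := tree_bound icC.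
have c1 : 0 < #|W| by rewrite card_gt0.
have c2 : 0 < #|~: W|.
  rewrite card_gt0; apply: contra WT => /eqP E.
  by rewrite -[W]setCK E setC0.
have hE := edges_split W; have hg := gen_split W; have hc := card_split W.
have s1 := stab_sum W SG; have s2 := stab_sum (~: W) SG.
rewrite val_sum A_sum in s1; rewrite val_sum A_sum valWC AWC in s2.
case/and3P: SG => _ /eqP gE _.

have gE' : edgesIn W + edgesIn (~: W) + valW W + 1 + (\sum_(v in W) gen G v + \sum_(v in ~: W) gen G v) = g + (#|W| + #|~: W|).
  by rewrite -hE -hg -hc.
clear hE hg hc gE.
move: s1 s2 gE' t1 t2 c1 c2 e1.
set s1 := \sum_(v in W) gen G v; set s2 := \sum_(v in ~: W) gen G v.
set E1 := edgesIn W; set E2 := edgesIn (~: W).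
set a1 := #|AW W|; set a2 := #|~: AW W|; set k1 := #|W|; set k2 := #|~: W|.
move=> *; apply: Dgn_intro; rewrite /genW -/s1 -/E1 -/k1; lia.

Qed.


Lemma DG_iso n (G1 G2 : sgraph n) x : iso_sgraph G1 G2 -> DG G1 x -> DG G2 x.
Proof.
case=> fV [fE [[fV' K1 K2] bE Hends Hgen Hmark]].
have bV : bijective fV by exists fV'.
move=> /existsP [W /andP [/and4P [W0 WT icW icC] /eqP ->]].
pose tr (Z : {set vtx G1}) : {set vtx G2} := [set v | fV' v \in Z].
have mem_tr : forall Z u, (fV u \in tr Z) = (u \in Z) by move=> Z u; rewrite inE K1.
have ends_tr : forall (Z : {set vtx G1}) (P : bool -> bool -> bool), (forall a b, P a b = P b a) ->
    forall i, P ((ends G2 (fE i)).1 \in tr Z) ((ends G2 (fE i)).2 \in tr Z) =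
              P ((ends G1 i).1 \in Z) ((ends G1 i).2 \in Z).
  by move=> Z P PC i; case: (Hends i) => -> /=; rewrite !mem_tr // PC.
have valtr : valW (tr W) = valW W.
  rewrite /valW !card_sum (reindex fE) /=; last exact: onW_bij.
  have nC : forall a b : bool, (a != b) = (b != a) by move=> a b; rewrite eq_sym.
  by apply: eq_bigr => i _; have /= -> := ends_tr W (fun a b => a != b) nC i.
have edtr : forall Z, edgesIn (tr Z) = edgesIn Z.
  move=> Z; rewrite /edgesIn !card_sum (reindex fE) /=; last exact: onW_bij.
  by apply: eq_bigr => i _; have /= -> := ends_tr Z (fun a b => a && b) andbC i.
have gentr : \sum_(v in tr W) gen G2 v = \sum_(v in W) gen G1 v.
  rewrite (reindex fV) /=; last exact: onW_bij.
  by apply: eq_big => [v|v _]; rewrite ?mem_tr ?Hgen.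
have cardtr : forall Z, #|tr Z| = #|Z|.
  move=> Z; rewrite -!sum1_card (reindex fV) /=; last exact: onW_bij.
  by apply: eq_bigl => v; rewrite mem_tr.
have Atr : AW (tr W) = AW W by apply/setP => j; rewrite !inE Hmark K1.
have Ctr : tr (~: W) = ~: tr W by apply/setP => v; rewrite !inE.
have ictr : forall Z, induced_connected Z -> induced_connected (tr Z).
  move=> Z /forall_inP icZ; apply/forall_inP => u uZ; apply/forall_inP => v vZ.
  rewrite -(K2 u) -(K2 v).
  apply: (connect_homo (e := fun x y => [&& x \in Z, y \in Z & adj x y])).
    move=> a b /and3P [aZ bZ /existsP [i ei]].
    rewrite !mem_tr aZ bZ /=; apply/existsP; exists (fE i).
    by case: (Hends i) => ->; case/orP: ei => /eqP -> /=; rewrite eqxx ?orbT.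
  rewrite inE in uZ; rewrite inE in vZ; exact: (forall_inP (icZ _ uZ) _ vZ).
apply/existsP; exists (tr W); apply/andP; split.
  apply/and4P; split.
  - case/set0Pn: W0 => u uW; apply/set0Pn; exists (fV u); by rewrite mem_tr.
  - apply: contra WT => /eqP E; apply/eqP/setP => v; rewrite inE.
    by have := mem_tr W v; rewrite E inE => <-.
  - exact: ictr.
  - by rewrite -Ctr; apply: ictr.
by rewrite valtr /genW edtr gentr cardtr Atr.
Qed.


Definition t0 : 'I_3 := @Ordinal 3 0 isT.
Definition t1 : 'I_3 := @Ordinal 3 1 isT.
Definition t2 : 'I_3 := @Ordinal 3 2 isT.

Lemma I3_cases (v : 'I_3) : [\/ v = t0, v = t1 | v = t2].
Proof.
by case: v => [[|[|[|m]]] Hm]; [apply: Or31|apply: Or32|apply: Or33|]; try apply: val_inj.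
Qed.

Lemma sum_I3 (f : 'I_3 -> nat) : \sum_v f v = f t0 + f t1 + f t2.
Proof.
rewrite !big_ord_recl big_ord0 addn0 addnA; congr (f _ + f _ + f _); exact: val_inj.
Qed.

Definition tri (n a b c h1 h2 h3 : nat) (A1 A2 : {set 'I_n}) : sgraph n :=
  @SGraph n 3 (a + b + c)
    (fun i => if val i < a then (t0, t1) else if val i < a + b then (t0, t2) else (t1, t2))
    (fun v => if v == t0 then h1 else if v == t1 then h2 else h3)
    (fun j => if j \in A1 then t0 else if j \in A2 then t1 else t2).

Lemma adj_sym n (G : sgraph n) : symmetric (@adj _ G).
Proof. by move=> u v; apply: eq_existsb => i; rewrite orbC. Qed.

Lemma pair_conn n (G : sgraph n) (W : {set vtx G}) u v : @adj _ G u v ->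
  (forall x, x \in W -> (x == u) || (x == v)) -> induced_connected W.
Proof.
move=> auv H; apply/forall_inP => x xW; apply/forall_inP => y yW.
have avu : @adj _ G v u by rewrite adj_sym.
case/orP: (H _ xW) => /eqP ex; case/orP: (H _ yW) => /eqP ey; subst x y;
  try by rewrite connect0.
all: by apply: connect1; rewrite /= xW yW.
Qed.

Section Tri.
Variables (n a b c h1 h2 h3 : nat) (A1 A2 : {set 'I_n}).
Local Notation T := (tri a b c h1 h2 h3 A1 A2).

Lemma tri_esum (phi : 'I_3 * 'I_3 -> nat) :
  \sum_(i : 'I_(ne T)) phi (ends T i) = a * phi (t0,t1) + b * phi (t0,t2) + c * phi (t1,t2).
Proof.
rewrite /=.
rewrite -(big_mkord xpredT (fun k => phi (if k < a then (t0, t1) else if k < a + b then (t0, t2) else (t1, t2)))).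
rewrite (@big_cat_nat _ _ _ a 0 (a+b+c)) //=; last by lia.
rewrite (@big_cat_nat _ _ _ (a+b) a (a+b+c)) //=; try by lia.
rewrite (eq_big_nat _ _ (F2 := fun _ => phi (t0,t1))); last by move=> k /andP [_ ->].
rewrite [X in _ + (X + _)](eq_big_nat _ _ (F2 := fun _ => phi (t0,t2))); last first.
  by move=> k /andP [ak ->]; rewrite ltnNge ak.
rewrite [X in _ + (_ + X)](eq_big_nat _ _ (F2 := fun _ => phi (t1,t2))); last first.
  move=> k /andP [ak _]; have -> : (k < a) = false by lia. by have -> : (k < a + b) = false by lia.
rewrite !sum_nat_const_nat; lia.
Qed.


Lemma tri_card (P : 'I_3 -> 'I_3 -> bool) :
  #|[set i : 'I_(ne T) | P (ends T i).1 (ends T i).2]| = a * P t0 t1 + b * P t0 t2 + c * P t1 t2.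
Proof. by rewrite card_sum (tri_esum (fun p => P p.1 p.2 : nat)). Qed.

Lemma tri_valv (v : vtx T) :
  valv v = a * ((t0 == v) + (t1 == v)) + b * ((t0 == v) + (t2 == v)) + c * ((t1 == v) + (t2 == v)).
Proof. by rewrite /valv (tri_esum (fun p => (p.1 == v) + (p.2 == v))). Qed.

Lemma tri_gen_sum : \sum_(v : vtx T) gen T v = h1 + h2 + h3.
Proof. by rewrite (sum_I3 (gen T)). Qed.

Lemma tri_sum_in (W : {set vtx T}) (f : 'I_3 -> nat) :
  \sum_(v in W) f v = (t0 \in W) * f t0 + (t1 \in W) * f t1 + (t2 \in W) * f t2.
Proof.
rewrite big_mkcond (sum_I3 (fun v => if v \in W then f v else 0)).
by case: (t0 \in W); case: (t1 \in W); case: (t2 \in W); rewrite /= ?mul0n ?mul1n.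
Qed.

Lemma tri_cardW (W : {set vtx T}) : #|W| = (t0 \in W) + (t1 \in W) + (t2 \in W).
Proof. by rewrite -sum1_card tri_sum_in !muln1. Qed.

Lemma tri_valW (W : {set vtx T}) : valW W =
  a * ((t0 \in W) != (t1 \in W)) + b * ((t0 \in W) != (t2 \in W)) + c * ((t1 \in W) != (t2 \in W)).
Proof. exact: (tri_card (fun x y => (x \in W) != (y \in W))). Qed.

Lemma tri_edgesIn (W : {set vtx T}) : edgesIn W =
  a * ((t0 \in W) && (t1 \in W)) + b * ((t0 \in W) && (t2 \in W)) + c * ((t1 \in W) && (t2 \in W)).
Proof. exact: (tri_card (fun x y => (x \in W) && (y \in W))). Qed.

Hypothesis dA : [disjoint A1 & A2].

Lemma tri_AW (W : {set vtx T}) :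
  AW W = [set j | if j \in A1 then t0 \in W else if j \in A2 then t1 \in W else t2 \in W].
Proof. by apply/setP => j; rewrite !inE /=; case: (j \in A1); case: (j \in A2). Qed.


Lemma tri_Aof0 : Aof (G := T) t0 = A1.
Proof. by apply/setP => j; rewrite !inE /=; case: (j \in A1); case: (j \in A2). Qed.

Lemma tri_Aof1 : Aof (G := T) t1 = A2.
Proof.
apply/setP => j; rewrite !inE /=; case jA: (j \in A1).
  by rewrite (disjointFr dA jA).
by case: (j \in A2).
Qed.

Lemma tri_Aof2 : Aof (G := T) t2 = ~: (A1 :|: A2).
Proof. by apply/setP => j; rewrite !inE /=; case: (j \in A1); case: (j \in A2). Qed.

End Tri.

Lemma DG_intro n (G : sgraph n) (W : {set vtx G}) :
  W != set0 -> W != setT -> induced_connected W -> induced_connected (~: W) ->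
  DG G (valW W, genW W, AW W).
Proof. by move=> *; apply/existsP; exists W; rewrite eqxx andbT; apply/and4P. Qed.


Lemma tri_main g n e h (A : {set 'I_n}) e' h' A' e'' h'' A'' :
  Dgn g (e,h,A) -> Dgn g (e',h',A') -> Dgn g (e'',h'',A'') ->
  A = A' :|: A'' -> [disjoint A' & A''] ->
  (2 * (h%:Z + 1 - h'%:Z - h''%:Z) = e'%:Z + e''%:Z - e%:Z)%R ->
  e < e' + e'' -> e' < e + e'' -> e'' < e + e' ->
  exists G : sgraph n, [/\ stable_graph G g, DG G (e,h,A), DG G (e',h',A') & DG G (e'',h'',A'')].
Proof.
move=> D D' D'' AU dA Hz l1 l2 l3.
have [E1 Eh S1 S1'] := Dgn_elim D.
have [E1' Eh' S2 S2'] := Dgn_elim D'.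
have [E1'' Eh'' S3 S3'] := Dgn_elim D''.
pose a := h + 1 - h' - h''; pose b := e' - a; pose c := e'' - a; pose h3 := g + 1 - e - h.
have [a1 b1 c1] : [/\ 0 < a, 0 < b & 0 < c] by rewrite /a /b /c; split; lia.
have [ab ac bc ha] : [/\ a + b = e', a + c = e'', b + c = e & h' + h'' + a = h + 1].
  by rewrite /a /b /c; split; lia.
pose G := tri a b c h' h'' h3 A' A''.
have x01 : @adj _ G t0 t1.
  apply/existsP; exists (@Ordinal (a + b + c) 0 ltac:(lia)); by rewrite /= a1.
have x02 : @adj _ G t0 t2.
  apply/existsP; exists (@Ordinal (a + b + c) a ltac:(lia)).
  by rewrite /= ltnn (_ : a < a + b) //; lia.
have x12 : @adj _ G t1 t2.
  apply/existsP; exists (@Ordinal (a + b + c) (a + b) ltac:(lia)).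
  by rewrite /= (_ : a + b < a = false) ?ltnn //; lia.
exists G; split.
- apply/and3P; split.
  + apply/andP; split => //; apply/forallP => u; apply/forallP => v.
    case: (I3_cases u) => ->; case: (I3_cases v) => ->; rewrite ?connect0 //;
      apply: connect1; rewrite // adj_sym //.
  + by rewrite tri_gen_sum /=; apply/eqP; rewrite /h3; lia.
  + apply/forallP => v; rewrite tri_valv.
    case: (I3_cases v) => ->; rewrite /= ?tri_Aof0 ?tri_Aof1 ?tri_Aof2 //=.
    * by rewrite /G /= !muln0 !muln1 !addn0 ab.
    * move: S3; rewrite -ac /G /=; lia.
    * move: S1'; rewrite -bc /G /= -AU /h3; lia.
- have -> : (e, h, A) = (valW (G := G) [set t0; t1], genW (G := G) [set t0; t1], AW (G := G) [set t0; t1]).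
    congr (_, _, _).
    + by rewrite /G tri_valW !inE /=; lia.
    + by rewrite /G /genW tri_edgesIn tri_sum_in tri_cardW !inE /=; lia.
    + rewrite /G tri_AW AU; apply/setP => j; rewrite !inE /=.
      by case: (j \in A'); case: (j \in A'').
  apply: DG_intro.
  + by apply/set0Pn; exists t0; rewrite !inE.
  + apply/negP => /eqP E; have : t2 \in [set t0; t1] by rewrite E inE.
    by rewrite !inE.
  + apply: (pair_conn x01) => x; rewrite !inE; by case/orP => ->; rewrite ?orbT.
  + by apply: single_conn => u v; rewrite !inE; case: (I3_cases u) => ->; case: (I3_cases v) => ->.
- have -> : (e', h', A') = (valW (G := G) [set t0], genW (G := G) [set t0], AW (G := G) [set t0]).
    congr (_, _, _).
    + by rewrite /G tri_valW !inE /=; lia.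
    + by rewrite /G /genW tri_edgesIn tri_sum_in tri_cardW !inE /=; lia.
    + rewrite /G tri_AW; apply/setP => j; rewrite !inE /=.
      by case: (j \in A'); case: (j \in A'').
  apply: DG_intro.
  + by apply/set0Pn; exists t0; rewrite !inE.
  + apply/negP => /eqP E; have : t2 \in [set t0] by rewrite E inE.
    by rewrite !inE.
  + by apply: single_conn => u v; rewrite !inE => /eqP -> /eqP ->.
  + by apply: (pair_conn x12) => x; rewrite !inE; case: (I3_cases x) => ->.
- have -> : (e'', h'', A'') = (valW (G := G) [set t1], genW (G := G) [set t1], AW (G := G) [set t1]).
    congr (_, _, _).
    + by rewrite /G tri_valW !inE /=; lia.
    + by rewrite /G /genW tri_edgesIn tri_sum_in tri_cardW !inE /=; lia.
    + rewrite /G tri_AW; apply/setP => j; rewrite !inE /=.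
      case jA: (j \in A'); last by case: (j \in A'').
      by rewrite (disjointFr dA jA).
  apply: DG_intro.
  + by apply/set0Pn; exists t1; rewrite !inE.
  + apply/negP => /eqP E; have : t2 \in [set t1] by rewrite E inE.
    by rewrite !inE.
  + by apply: single_conn => u v; rewrite !inE => /eqP -> /eqP ->.
  + by apply: (pair_conn x02) => x; rewrite !inE; case: (I3_cases x) => ->.
Qed.


From Stdlib Require Import ClassicalEpsilon.
Unset Implicit Arguments.
Theorem mainTheorem11 (g n : nat) (d : int) (R : sgraph n -> Prop) :
  2 < 2 * g + n ->
  representatives g R ->
  [/\
   (forall x, Dgn g x -> exists2 G, R G & DG G x),
   (forall G, R G -> forall x, DG G x -> Dgn g x),
   (forall m, universal_stab g d m -> forall G, R G -> cstab g G d m),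
   (forall m m', universal_stab g d m -> universal_stab g d m' ->
      (forall G, R G -> forall x, DG G x -> m x = m' x) ->
      forall x, Dgn g x -> m x = m' x) &
   (forall F : sgraph n -> triple n -> int,
      (forall G, R G -> cstab g G d (F G)) ->
      (forall G G', R G -> R G' -> forall x, DG G x -> DG G' x -> F G x = F G' x) ->
      exists m, universal_stab g d m /\
        (forall G, R G -> forall x, DG G x -> m x = F G x))].
Proof.
move=> _ [Rst Rrep _].
have rep : forall G, stable_graph G g -> exists2 G', R G' & forall x, DG G x -> DG G' x.
  move=> G SG; have [G' RG' iso] := Rrep G SG; exists G' => // x; exact: DG_iso.
have vst : forall e h (A : {set 'I_n}), Dgn g (e,h,A) -> stable_graph (vine g e h A) g.
  by move=> e h A /and3P [].
have P1 : forall x, Dgn g x -> exists2 G, R G & DG G x.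
  case=> [[e h] A] D; have [V1 _] := vine_DG D.
  have [G' RG' H] := rep _ (vst _ _ _ D); exists G' => //; exact: H.
have P2 : forall G, R G -> forall x, DG G x -> Dgn g x.
  by move=> G RG x; apply: DG_Dgn; apply: Rst.
split => //.
- move=> m [Hi Hii] G RG; split.
    by move=> x Px Pdx; apply: Hi; [exact: (P2 G RG x) | exact: (P2 G RG _)].
  move=> e h A e' h' A' e'' h'' A'' Q1 Q2 Q3; apply: Hii; exact: (P2 G RG).
- move=> m m' _ _ H x Dx; have [G RG DGx] := P1 x Dx; exact: (H G RG x DGx).
move=> F Fc Fag.
have pick : forall x, {G | Dgn g x -> R G /\ DG G x}.
  move=> x; apply: constructive_indefinite_description.
  case Dx: (Dgn g x).
    by have [G RG DGx] := P1 x Dx; exists G.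
  by exists (vine g 0 0 set0).
pose m x := F (proj1_sig (pick x)) x.
have key : forall x G, R G -> DG G x -> m x = F G x.
  move=> x G RG DGx; have Dx := P2 G RG x DGx.
  have [R0 D0] := proj2_sig (pick x) Dx.
  exact: Fag.
exists m; split; last by move=> G RG x Dx; exact: key. split.
  case=> [[e h] A] Dx Ddx.
  have [V1 V2] := vine_DG Dx.
  have [G' RG' H] := rep _ (vst _ _ _ Dx).
  rewrite (key _ G' RG' (H _ V1)) (key _ G' RG' (H _ V2)).
  by apply: (Fc G' RG').1; apply: H.
move=> e h A e' h' A' e'' h'' A'' Q1 Q2 Q3 AU dA Hz l1 l2 l3.
have [G [SG D1 D2 D3]] := tri_main Q1 Q2 Q3 AU dA Hz l1 l2 l3.
have [G' RG' H] := rep _ SG.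
rewrite (key _ G' RG' (H _ D1)) (key _ G' RG' (H _ D2)) (key _ G' RG' (H _ D3)).
exact: ((Fc G' RG').2 _ _ _ _ _ _ _ _ _ (H _ D1) (H _ D2) (H _ D3) AU dA Hz l1 l2 l3).
Qed.
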